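(* Fix $N=\{1,\dots,n\}$ and $N_0=N\cup\{0\}$, and let $RS^{N_0}$ be the class of RS-games with player set $N_0$. There is a unique solution $\xi$ on $RS^{N_0}$ satisfying (EF), (SR), (RR) and (PD), namely \[\xi_0(v)=n\beta,\qquad \xi_i(v)=v(\{0,i\})-\beta\ \ (i\in N),\qquad\text{where }\beta=\min_{S\subseteq N,\,S\neq\emptyset}\frac{v(S_0)-v(S)}{s}.\] Here, for a solution $\varphi$ and every $v\in RS^{N_0}$: (EF) $\sum_{i\in N_0}\varphi_i(v)=v(N_0)$; (SR) $\sum_{i\in S}\varphi_i(v)\ge v(S)$ for all coalitions $S\subseteq N$; (RR) for every $i\in N$ there is a nonempty coalition $S^i\subseteq N$ with $\varphi_i(v)=v(\{0,i\})-\frac{v(S^i_0)-v(S^i)}{s^i}$, where $s^i=|S^i|$; (PD) $\varphi_i(v)-\varphi_j(v)=v(\{0,i\})-v(\{0,j\})$ for all $i,j\in N$ with $i\neq j$.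
   Context: Let $c\in\mathbb{R}$. An RS-problem is a triple $(c,w,p)$ where $w:\mathbb{R}_+\to(c,+\infty)$ is decreasing (non-increasing) and continuous, and $p:\mathbb{R}_+\to\mathbb{R}$ is decreasing (non-increasing) and continuous, satisfies $p(0)>w(0)$, and there exists $q>0$ with $p(q)=c$. An RS-situation is a tuple $(N_0,c,w,P)$ where $N=\{1,\dots,n\}$ is the set of retailers, $0$ denotes the supplier, $N_0=N\cup\{0\}$, $P=(p_1,\dots,p_n)$, and $(c,w,p_i)$ is an RS-problem for each $i\in N$. For $S\subseteq N$ write $S_0=S\cup\{0\}$ and $s=|S|$. For $q\ge0$ and $\omega\in\mathbb{R}$, $\Pi_i^{ret}(q;\omega)=(p_i(q)-\omega)q$. For nonempty $S\subseteq N$, $(q_i^S)_{i\in S}$ is a fixed optimal solution of: maximize $\sum_{i\in S}(p_i(q_i)-w(q_S))q_i$ over $q\in\mathbb{R}_+^{S}$ subject to $p_i(q_i)\ge w(q_S)$ for all $i\in S$, where $q_S=\sum_{i\in S}q_i$; $q_S^S=\sum_{i\in S}q_i^S$. For $i\in N$, $q_i^c$ is a fixed optimal solution of: maximize $(p_i(q)-c)q$ over $q\ge0$ subject to $p_i(q)\ge c$. The corresponding RS-game $(N_0,v)$ is the TU game on $N_0$ with $v(\emptyset)=0$ and, for all $S\subseteq N$, $v(S)=\sum_{i\in S}\Pi_i^{ret}(q_i^S;w(q_S^S))$ and $v(S_0)=\sum_{i\in S}\Pi_i^{ret}(q_i^c;c)$. A (single-valued) solution on $RS^{N_0}$ is a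 map $\varphi$ assigning to each $v\in RS^{N_0}$ a vector $\varphi(v)=(\varphi_i(v))_{i\in N_0}\in\mathbb{R}^{N_0}$. *)

(* Defs.v *)
From HB Require Import structures.
From mathcomp Require Import all_boot all_order all_algebra.
From mathcomp Require Import all_classical all_reals all_analysis.
Set Implicit Arguments. Unset Strict Implicit. Unset Printing Implicit Defensive.
Import Order.TTheory GRing.Theory Num.Theory.
Import numFieldNormedType.Exports.

Local Open Scope ring_scope.

(* Players are 'I_n.+1; player ord0 is the supplier 0, players i != ord0 are
   the retailers N = {1,...,n}.  A coalition is a {set 'I_n.+1}; a coalition
   S is a subset of N iff ord0 \notin S, and S_0 = ord0 |: S. *)

Section RS.
Variable R : realType.

Definition nonincr_Rplus (f : R -> R) : Prop :=
  forall x y, 0 <= x -> x <= y -> f y <= f x.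

Definition cont_Rplus (f : R -> R) : Prop :=
  {within `[0, +oo[%classic, continuous f}%classic.

Definition RS_problem (c : R) (w p : R -> R) : Prop :=
  [/\ (forall x, 0 <= x -> c < w x), nonincr_Rplus w & cont_Rplus w] /\
  [/\ nonincr_Rplus p, cont_Rplus p, w 0 < p 0 &
      exists q, 0 < q /\ p q = c].

Variable n : nat.
Notation player := 'I_n.+1.
Notation retailer i := (i != (ord0 : player)).

Definition RS_situation (c : R) (w : R -> R) (P : player -> R -> R) : Prop :=
  forall i : player, retailer i -> RS_problem c w (P i).

Definition Pi_ret (p : R -> R) (q om : R) : R := (p q - om) * q.

Definition qtot (S : {set player}) (q : player -> R) : R := \sum_(i in S) q i.

Definition feasible_S (w : R -> R) (P : player -> R -> R) (S : {set player})
  (q : player -> R) : Prop :=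
  forall i, i \in S -> 0 <= q i /\ w (qtot S q) <= P i (q i).

Definition obj_S (w : R -> R) (P : player -> R -> R) (S : {set player})
  (q : player -> R) : R :=
  \sum_(i in S) Pi_ret (P i) (q i) (w (qtot S q)).

Definition optimal_S (w : R -> R) (P : player -> R -> R) (S : {set player})
  (q : player -> R) : Prop :=
  feasible_S w P S q /\
  forall q' : player -> R, feasible_S w P S q' -> obj_S w P S q' <= obj_S w P S q.

Definition optimal_c (c : R) (p : R -> R) (q : R) : Prop :=
  (0 <= q /\ c <= p q) /\
  forall q', 0 <= q' -> c <= p q' -> Pi_ret p q' c <= Pi_ret p q c.

(* the RS-game associated with the RS-situation (N_0,c,w,P) and the fixed
   optimal solutions qS (q^S for each nonempty S ⊆ N) and qc (q^c_i) *)
Definition RS_game_of (c : R) (w : R -> R) (P : player -> R -> R)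
  (qS : {set player} -> player -> R) (qc : player -> R) : {set player} -> R :=
  fun T =>
    if ord0 \in T then \sum_(i in T | retailer i) Pi_ret (P i) (qc i) c
    else \sum_(i in T) Pi_ret (P i) (qS T i) (w (qtot T (qS T))).

Definition RS_game (v : {set player} -> R) : Prop :=
  exists c w P qS qc,
    [/\ RS_situation c w P,
        (forall S : {set player}, ord0 \notin S -> S != finset.set0 ->
           optimal_S w P S (qS S)),
        (forall i : player, retailer i -> optimal_c c (P i) (qc i)) &
        v = RS_game_of c w P qS qc].

Definition solution := ({set player} -> R) -> player -> R.

Definition EF (phi : solution) : Prop :=
  forall v, RS_game v -> \sum_(i : player) phi v i = v [set: player].

Definition SR (phi : solution) : Prop :=
  forall v, RS_game v -> forall S : {set player}, ord0 \notin S ->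
    v S <= \sum_(i in S) phi v i.

Definition RR (phi : solution) : Prop :=
  forall v, RS_game v -> forall i : player, retailer i ->
    exists Si : {set player}, [/\ ord0 \notin Si, Si != finset.set0 &
      phi v i = v [set ord0; i] - (v (ord0 |: Si) - v Si) / #|Si|%:R].

Definition PD (phi : solution) : Prop :=
  forall v, RS_game v -> forall i j : player, retailer i -> retailer j -> i != j ->
    phi v i - phi v j = v [set ord0; i] - v [set ord0; j].

(* beta = min over nonempty S ⊆ N of (v(S_0) - v(S)) / s.  The big min is
   seeded with the value at the nonempty coalition {1} (a member of the range
   when n >= 1), so it is the true minimum. *)
Definition beta_ratio (v : {set player} -> R) (S : {set player}) : R :=
  (v (ord0 |: S) - v S) / #|S|%:R.

Definition beta (v : {set player} -> R) : R :=
  \big[Order.min/beta_ratio v [set inord 1]]_(S : {set player} | (ord0 \notin S) && (S != finset.set0))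
     beta_ratio v S.

Definition xi : solution := fun v i =>
  if i == ord0 then n%:R * beta v else v [set ord0; i] - beta v.

End RS.

(* Main.v *)
Require Import Defs.
From HB Require Import structures.
From mathcomp Require Import all_boot all_order all_algebra.
From mathcomp Require Import all_classical all_reals all_analysis.
From mathcomp Require Import lra.
Import Order.TTheory GRing.Theory Num.Theory.
Local Open Scope ring_scope.

Section Aux.
Set Implicit Arguments. Unset Strict Implicit.
Variables (R : realType) (n : nat).
Notation player := 'I_n.+1.

Definition additive0 (v : {set player} -> R) (a : player -> R) :=
  v finset.set0 = 0 /\
  forall T : {set player}, ord0 \in T -> v T = \sum_(i in T :\ ord0) a i.

Lemma RS_add v : RS_game v -> exists a, additive0 v a.
Proof.
case=> c [w [P [qS [qc [_ _ _ ->]]]]].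
exists (fun i => Pi_ret (P i) (qc i) c); split.
  by rewrite /RS_game_of finset.in_set0 finset.big_set0.
move=> T hT; rewrite /RS_game_of hT.
by apply: eq_bigl => i; rewrite in_setD1 andbC.
Qed.

Lemma add_pair v a i : additive0 v a -> i != ord0 -> v [set ord0; i] = a i.
Proof.
move=> [_ H] hi; rewrite H ?in_set2 ?eqxx //.
have -> : [set ord0; i] :\ ord0 = [set i].
  apply/setP => j; rewrite !inE; case: (eqVneq j ord0) => [->|hj] //=.
  by rewrite eq_sym (negbTE hi).
by rewrite big_set1.
Qed.

Lemma add_S0 v a (S : {set player}) : additive0 v a -> ord0 \notin S ->
  v (ord0 |: S) = \sum_(i in S) a i.
Proof. by move=> [_ H] hS; rewrite H ?setU11 // setU1K. Qed.

Lemma add_T v a : additive0 v a -> v [set: player] = \sum_(i | i != ord0) a i.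
Proof.
move=> [_ H]; rewrite H ?finset.in_setT //; apply: eq_bigl => i.
by rewrite in_setD1 finset.in_setT andbT.
Qed.

Definition validS (S : {set player}) := (ord0 \notin S) && (S != finset.set0).

Lemma one_valid : (0 < n)%N -> validS [set inord 1].
Proof.
move=> hn; rewrite /validS finset.in_set1 -cards_eq0 cards1 andbT.
apply/eqP => /(congr1 val) /=; rewrite inordK //.
Qed.

Lemma one_ret : (0 < n)%N -> (inord 1 : player) != ord0.
Proof. by move=> hn; apply/eqP => /(congr1 val) /=; rewrite inordK. Qed.

Lemma beta_le (v : {set player} -> R) S : validS S -> beta v <= beta_ratio v S.
Proof. by move=> hS; apply: bigmin_le_cond. Qed.

Lemma beta_attained (v : {set player} -> R) : (0 < n)%N ->
  exists S, validS S /\ beta v = beta_ratio v S.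
Proof.
move=> hn; rewrite /beta.
apply: (big_ind (fun x => exists S, validS S /\ x = beta_ratio v S)).
- by exists [set inord 1]; split => //; apply: one_valid.
- move=> x y [S1 [h1 ->]] [S2 [h2 ->]].
  rewrite /Order.min; case: ifP => _; [by exists S1 | by exists S2].
- by move=> S hS; exists S.
Qed.

Lemma le_beta (v : {set player} -> R) b : (0 < n)%N -> (forall S, validS S -> b <= beta_ratio v S) ->
  b <= beta v.
Proof.
move=> hn H; rewrite /beta.
apply: (big_ind (fun x => b <= x)).
- by apply: H; apply: one_valid.
- by move=> x y hx hy; rewrite le_min hx hy.
- by move=> S hS; apply: H.
Qed.

Lemma card_ret : #|[pred i : player | i != ord0]| = n.
Proof. by rewrite (cardC1 (ord0 : player)) card_ord. Qed.

Lemma card_pos (S : {set player}) : validS S -> 0 < (#|S|%:R : R).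
Proof. by case/andP => _ hS; rewrite ltr0n lt0n cards_eq0. Qed.

End Aux.

Theorem theorem6p1 (R : realType) (n : nat) (hn : (0 < n)%N) :
  (EF (@xi R n) /\ SR (@xi R n) /\ RR (@xi R n) /\ PD (@xi R n)) /\
  (forall phi : solution R n, EF phi -> SR phi -> RR phi -> PD phi ->
     forall v, RS_game v -> phi v = xi v).
Proof.
have h1r : (inord 1 : 'I_n.+1) != ord0 := @one_ret n hn.
split.
split.
  move=> v /RS_add [a ha].
  rewrite (bigD1 ord0) //= /xi eqxx (add_T ha).
  rewrite (eq_bigr (fun i => a i - beta v)); last first.
    by move=> i hi; rewrite (negbTE hi) (add_pair ha hi).
  rewrite sumrB sumr_const card_ret -mulr_natl; lra.
split.
  move=> v /RS_add [a ha] S hS.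
  case: (eqVneq S finset.set0) => [->|hne].
    by rewrite ha.1 finset.big_set0.
  have vS : validS S by rewrite /validS hS hne.
  rewrite (eq_bigr (fun i => a i - beta v)); last first.
    move=> i hi; have hi0 : i != ord0 by apply: contraNneq hS => <-.
    by rewrite /xi (negbTE hi0) (add_pair ha hi0).
  have := beta_le v vS; rewrite /beta_ratio ler_pdivlMr ?card_pos // (add_S0 ha hS).
  rewrite sumrB sumr_const -mulr_natr; lra.
split.
  move=> v hv i hi.
  have [S [hS hb]] := beta_attained v hn.
  exists S; case/andP: hS => hS1 hS2; split => //.
  by rewrite /xi (negbTE hi) hb.
move=> v _ i j hi hj _; rewrite /xi (negbTE hi) (negbTE hj); lra.
move=> phi hEF hSR hRR hPD v hv.
have [a ha] := RS_add hv.
set i1 : 'I_n.+1 := inord 1.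
set b := a i1 - phi v i1.
have hphi : forall i, i != ord0 -> phi v i = a i - b.
  move=> i hi; case: (eqVneq i i1) => [->|ne]; first by rewrite /b; lra.
  have := hPD v hv i i1 hi h1r ne.
  rewrite (add_pair ha hi) (add_pair ha h1r) /b; lra.
have hb1 : b <= beta v.
  apply: le_beta => // S hS.
  have hS0 : ord0 \notin S by case/andP: hS.
  rewrite /beta_ratio ler_pdivlMr ?card_pos // (add_S0 ha hS0).
  have := hSR v hv S hS0.
  rewrite (eq_bigr (fun i => a i - b)); last first.
    move=> i hi; have hi0 : i != ord0 by apply: contraNneq hS0 => <-.
    by rewrite hphi.
  rewrite sumrB sumr_const -mulr_natr; lra.
have hb2 : beta v <= b.
  have [S [hS1 hS2 e]] := hRR v hv i1 h1r.
  have vS : validS S by rewrite /validS hS1 hS2.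
  have := beta_le v vS; rewrite /beta_ratio (add_pair ha h1r) in e *.
  rewrite /b e; lra.
have hbe : b = beta v by apply/eqP; rewrite eq_le hb1 hb2.
apply: funext => i.
case: (eqVneq i ord0) => [->|hi].
  have := hEF v hv; rewrite (bigD1 ord0) //= /xi eqxx (add_T ha).
  rewrite (eq_bigr (fun i => a i - b)); last by move=> k hk; rewrite hphi.
  rewrite sumrB sumr_const card_ret -mulr_natl -hbe; lra.
by rewrite /xi (negbTE hi) hphi // (add_pair ha hi) hbe.
Qed.
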